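(* For all $x>0$ and $\nu>0$, \begin{align*} \left.\frac{\partial\,\mathrm{ber}_{\mu}(x)}{\partial\mu}\right|_{\mu=-\nu} &=-\mathrm{Re}\left[e^{-i\pi\nu/2}\left\{\left(e^{-i\pi\nu}+\cos\pi\nu\right)K_{\nu}\left(e^{i\pi/4}x\right)+\frac{2}{\pi}\sin\pi\nu\,\frac{\partial K_{\nu}}{\partial\nu}\left(e^{i\pi/4}x\right)\right\}+\frac{\partial J_{\nu}}{\partial\nu}\left(e^{-i\pi/4}x\right)\right],\\ \left.\frac{\partial\,\mathrm{bei}_{\mu}(x)}{\partial\mu}\right|_{\mu=-\nu} &=-\mathrm{Im}\left[e^{-i\pi\nu/2}\left\{\left(e^{-i\pi\nu}+\cos\pi\nu\right)K_{\nu}\left(e^{i\pi/4}x\right)+\frac{2}{\pi}\sin\pi\nu\,\frac{\partial K_{\nu}}{\partial\nu}\left(e^{i\pi/4}x\right)\right\}+\frac{\partial J_{\nu}}{\partial\nu}\left(e^{-i\pi/4}x\right)\right]. \end{align*}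
   Context: $J_\nu$ is the Bessel function of the first kind and $K_\nu$ the Macdonald function (modified Bessel function of the second kind), with principal branches. For real $\nu$ and $x\ge0$ the Kelvin functions are defined by $\mathrm{ber}_{\nu}(x)+i\,\mathrm{bei}_{\nu}(x)=e^{i\pi\nu}J_{\nu}(e^{-i\pi/4}x)$ and $\mathrm{ker}_{\nu}(x)+i\,\mathrm{kei}_{\nu}(x)=e^{-i\pi\nu/2}K_{\nu}(e^{i\pi/4}x)$, with all four functions real-valued. The notation $\frac{\partial J_{\nu}}{\partial\nu}(z)$ means $\frac{\partial}{\partial\mu}J_\mu(z)\big|_{\mu=\nu}$, similarly for $K_\nu$. (The paper writes the left-hand sides as $\partial\,\mathrm{ber}_{-\nu}(x)/\partial\nu$ and $\partial\,\mathrm{bei}_{-\nu}(x)/\partial\nu$, meaning the order derivative evaluated at order $-\nu$.) *)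

(* Defs.v *)
From Stdlib Require Import Reals.
From Coquelicot Require Import Coquelicot.
Open Scope R_scope.

Definition CC := Complex.C.

Definition cexp (z : CC) : CC :=
  (exp (Re z) * cos (Im z), exp (Re z) * sin (Im z)).

(* principal argument, in (-PI, PI] *)
Definition carg (z : CC) : R :=
  let a := Re z in let b := Im z in
  if Rlt_dec 0 a then atan (b / a)
  else if Rlt_dec a 0 then
    (if Rle_dec 0 b then atan (b / a) + PI else atan (b / a) - PI)
  else if Rlt_dec 0 b then PI / 2
  else if Rlt_dec b 0 then - (PI / 2) else 0.

(* principal logarithm (junk at 0) *)
Definition clog (z : CC) : CC := (ln (Cmod z), carg z).

Definition cpow (z : CC) (a : R) : CC := cexp (Cmult (RtoC a) (clog z)).

Definition csum (u : nat -> CC) : CC :=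
  (Series (fun k => Re (u k)), Series (fun k => Im (u k))).

(* reciprocal Gamma function 1/Gamma(s) (entire, zero at s = 0,-1,-2,...),
   by Gauss' product formula:
   1/Gamma(s) = lim_n s(s+1)...(s+n) / (n! n^s) *)
Definition rgamma (s : R) : R :=
  real (Lim_seq (fun n => prod_f_R0 (fun k => s + INR k) n
                          / (INR (Factorial.fact n) * Rpower (INR n) s))).

Definition BesselJ (nu : R) (z : CC) : CC :=
  csum (fun k => Cmult (RtoC ((-1) ^ k * rgamma (nu + INR k + 1) / INR (Factorial.fact k)))
                       (cpow (Cdiv z (RtoC 2)) (nu + 2 * INR k))).

Definition BesselI (nu : R) (z : CC) : CC :=
  csum (fun k => Cmult (RtoC (rgamma (nu + INR k + 1) / INR (Factorial.fact k)))
                       (cpow (Cdiv z (RtoC 2)) (nu + 2 * INR k))).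

(* K_nu(z) = pi/2 (I_{-nu}(z) - I_nu(z)) / sin(nu pi) for non-integer nu,
   and the limit of this expression at integer nu *)
Definition BesselK_raw (nu : R) (z : CC) : CC :=
  Cmult (RtoC (PI / 2 / sin (nu * PI))) (Cminus (BesselI (- nu) z) (BesselI nu z)).

Definition BesselK (nu : R) (z : CC) : CC :=
  (real (Lim (fun mu => Re (BesselK_raw mu z)) nu),
   real (Lim (fun mu => Im (BesselK_raw mu z)) nu)).

Definition dorder (F : R -> CC -> CC) (nu : R) (z : CC) : CC :=
  (Derive (fun mu => Re (F mu z)) nu, Derive (fun mu => Im (F mu z)) nu).

Definition eI (theta : R) : CC := cexp (0, theta).

(* Kelvin functions (as defined in the paper):
   ber_nu(x) + i bei_nu(x) = e^{i pi nu} J_nu(e^{-i pi/4} x) *)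
Definition ber (nu x : R) : R :=
  Re (Cmult (eI (PI * nu)) (BesselJ nu (Cmult (eI (- (PI / 4))) (RtoC x)))).
Definition bei (nu x : R) : R :=
  Im (Cmult (eI (PI * nu)) (BesselJ nu (Cmult (eI (- (PI / 4))) (RtoC x)))).

Definition kelvin_rhs (nu x : R) : CC :=
  let w1 := Cmult (eI (PI / 4)) (RtoC x) in
  let w2 := Cmult (eI (- (PI / 4))) (RtoC x) in
  Cplus
    (Cmult (eI (- (PI * nu / 2)))
       (Cplus (Cmult (Cplus (eI (- (PI * nu))) (RtoC (cos (PI * nu)))) (BesselK nu w1))
              (Cmult (RtoC (2 / PI * sin (PI * nu))) (dorder BesselK nu w1))))
    (dorder BesselJ nu w2).

(* Main.v *)
Require Import Defs.
From Stdlib Require Import Reals Lra Lia ZArith.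
From Coquelicot Require Import Coquelicot.
Open Scope R_scope.


Lemma mvt_bound (g g' : R -> R) (x0 d K a b : R) :
  (forall y, Rabs (y - x0) < d -> is_derive g y (g' y)) ->
  (forall y, Rabs (y - x0) < d -> Rabs (g' y) <= K) ->
  Rabs (a - x0) < d -> Rabs (b - x0) < d ->
  Rabs (g b - g a) <= K * Rabs (b - a).
Proof.
  intros Hd HK Ha Hb.
  assert (Hin : forall c, Rmin a b <= c <= Rmax a b -> Rabs (c - x0) < d).
  { intros c Hc. unfold Rmin, Rmax in Hc. destruct (Rle_dec a b);
    apply Rabs_def1; apply Rabs_def2 in Ha; apply Rabs_def2 in Hb; lra. }
  destruct (Rtotal_order a b) as [Hab|[Hab|Hab]].
  - destruct (MVT_cor2 g g' a b Hab) as [c [Hc1 Hc2]].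
    { intros c Hc. apply is_derive_Reals. apply Hd. apply Hin.
      unfold Rmin, Rmax; destruct (Rle_dec a b); lra. }
    rewrite Hc1, Rabs_mult. apply Rmult_le_compat_r. apply Rabs_pos.
    apply HK, Hin. unfold Rmin, Rmax; destruct (Rle_dec a b); lra.
  - subst. rewrite !Rminus_diag, Rabs_R0. rewrite Rmult_0_r. lra.
  - destruct (MVT_cor2 g g' b a Hab) as [c [Hc1 Hc2]].
    { intros c Hc. apply is_derive_Reals. apply Hd. apply Hin.
      unfold Rmin, Rmax; destruct (Rle_dec a b); lra. }
    rewrite <- Rabs_Ropp, Ropp_minus_distr, Hc1, Rabs_mult.
    rewrite (Rabs_minus_sym b a).
    apply Rmult_le_compat_r. apply Rabs_pos.
    apply HK, Hin. unfold Rmin, Rmax; destruct (Rle_dec a b); lra.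
Qed.

Lemma lim_abs_le (u : nat -> R) (l C : R) (N : nat) :
  is_lim_seq u l -> (forall m, (N <= m)%nat -> Rabs (u m) <= C) -> Rabs l <= C.
Proof.
  intros Hl HC. destruct (Rle_dec (Rabs l) C) as [h|h]; auto.
  exfalso. apply Rnot_le_lt in h.
  apply is_lim_seq_spec in Hl.
  destruct (Hl (mkposreal (Rabs l - C) ltac:(lra))) as [N2 HN2].
  simpl in HN2. specialize (HN2 (max N N2) (Nat.le_max_r _ _)).
  specialize (HC (max N N2) (Nat.le_max_l _ _)).
  assert (Rabs l <= Rabs (u (max N N2)) + Rabs (u (max N N2) - l)).
  { replace l with (u (max N N2) - (u (max N N2) - l)) at 1 by ring.
    eapply Rle_trans. apply Rabs_triang. rewrite Rabs_Ropp. lra. }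
  lra.
Qed.

Lemma UL (F F' : nat -> R -> R) (f : R -> R) (g x0 d : R) :
  0 < d ->
  (forall n y, Rabs (y - x0) < d -> is_derive (F n) y (F' n y)) ->
  (forall y, Rabs (y - x0) < d -> is_lim_seq (fun n => F n y) (f y)) ->
  is_lim_seq (fun n => F' n x0) g ->
  (forall eps, 0 < eps -> exists N, forall n m y, (N <= n)%nat -> (N <= m)%nat ->
       Rabs (y - x0) < d -> Rabs (F' n y - F' m y) <= eps) ->
  is_derive f x0 g.
Proof.
  intros Hd HF Hf Hg Hc.
  apply is_derive_Reals. intros eps Heps.
  destruct (Hc (eps/4)) as [N1 HN1]; [lra|].
  apply is_lim_seq_spec in Hg.
  destruct (Hg (mkposreal (eps/4) ltac:(lra))) as [N2 HN2]. simpl in HN2.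
  set (n := max N1 N2).
  assert (Hx0 : Rabs (x0 - x0) < d) by (rewrite Rminus_diag, Rabs_R0; lra).
  pose proof (HF n x0 Hx0) as Hdn. apply is_derive_Reals in Hdn.
  destruct (Hdn (eps/4)) as [d0 Hd0]; [lra|].
  assert (Hpos : 0 < Rmin d0 d) by (apply Rmin_pos; [apply cond_pos|lra]).
  exists (mkposreal _ Hpos). simpl. intros h Hh0 Hh.
  assert (Hhd : Rabs (x0 + h - x0) < d).
  { replace (x0 + h - x0) with h by ring. eapply Rlt_le_trans; [apply Hh|apply Rmin_r]. }
  assert (Key : Rabs ((f (x0 + h) - F n (x0 + h)) - (f x0 - F n x0)) <= eps/4 * Rabs h).
  { apply (lim_abs_le (fun m => (F m (x0 + h) - F n (x0 + h)) - (F m x0 - F n x0)) _ _ n).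
    - apply is_lim_seq_minus'. apply is_lim_seq_minus'. apply Hf; auto.
      apply is_lim_seq_const. apply is_lim_seq_minus'. apply Hf; auto. apply is_lim_seq_const.
    - intros m Hm.
      replace (x0 + h - x0) with h in Hhd by ring.
      assert (Hm' := mvt_bound (fun y => F m y - F n y) (fun y => F' m y - F' n y) x0 d (eps/4) x0 (x0 + h)).
      replace (x0 + h - x0) with h in Hm' by ring. apply Hm'.
      + intros y Hy. apply (is_derive_minus (F m) (F n)); apply HF; auto.
      + intros y Hy. apply HN1; auto; unfold n in *; lia.
      + exact Hx0.
      + replace (x0 + h - x0) with h by ring; auto. }
  assert (H2 : Rabs ((F n (x0 + h) - F n x0) / h - F' n x0) < eps / 4).
  { apply Hd0; auto. eapply Rlt_le_trans; [apply Hh|apply Rmin_l]. }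
  assert (H3 : Rabs (F' n x0 - g) < eps/4) by (apply HN2; unfold n; lia).
  assert (H1 : Rabs (((f (x0 + h) - F n (x0 + h)) - (f x0 - F n x0)) / h) <= eps/4).
  { unfold Rdiv. rewrite Rabs_mult, Rabs_inv.
    apply (Rmult_le_reg_r (Rabs h)). apply Rabs_pos_lt; auto.
    rewrite Rmult_assoc, Rinv_l. lra. apply Rabs_no_R0; auto. }
  replace ((f (x0 + h) - f x0) / h - g) with
    (((f (x0 + h) - F n (x0 + h)) - (f x0 - F n x0)) / h +
     ((F n (x0 + h) - F n x0) / h - F' n x0) + (F' n x0 - g)) by (field; auto).
  eapply Rle_lt_trans. apply Rabs_triang.
  eapply Rle_lt_trans. apply Rplus_le_compat_r. apply Rabs_triang. lra.
Qed.

Lemma ex_series_tail (a M : nat -> R) (K0 : nat) :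
  (forall k, (K0 <= k)%nat -> Rabs (a k) <= M k) -> ex_series M -> ex_series a.
Proof.
  intros H HM. apply (proj2 (@ex_series_incr_n R_AbsRing R_NormedModule a K0)).
  apply (@ex_series_le R_AbsRing R_CompleteNormedModule _ (fun k => M (K0 + k)%nat)).
  - intros k. apply H. lia.
  - apply (proj1 (@ex_series_incr_n R_AbsRing R_NormedModule M K0)). auto.
Qed.

Lemma sum_n_m_bound (a M : nat -> R) (K0 p q : nat) :
  (K0 <= p)%nat -> (forall k, (K0 <= k)%nat -> Rabs (a k) <= M k) ->
  Rabs (sum_n_m a p q) <= sum_n_m M p q.
Proof.
  intros Hp H. induction q.
  - destruct p.
    + rewrite !sum_n_n. apply H. lia.
    + rewrite !sum_n_m_zero by lia. unfold zero; simpl. rewrite Rabs_R0. lra.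
  - destruct (Compare_dec.le_lt_dec p (S q)) as [h|h].
    + destruct (Nat.eq_dec p (S q)) as [e|e].
      * subst. rewrite !sum_n_n. apply H; lia.
      * rewrite !sum_n_Sm by lia.
        eapply Rle_trans. apply Rabs_triang. apply Rplus_le_compat. auto. apply H. lia.
    + rewrite !sum_n_m_zero by lia. unfold zero; simpl. rewrite Rabs_R0. lra.
Qed.

Lemma is_derive_sum_n (f f' : nat -> R -> R) (y : R) (n : nat) :
  (forall k, is_derive (f k) y (f' k y)) ->
  is_derive (fun y => sum_f_R0 (fun k => f k y) n) y (sum_f_R0 (fun k => f' k y) n).
Proof.
  intros H. induction n.
  - simpl. auto.
  - simpl. apply (is_derive_plus (fun y => sum_f_R0 (fun k => f k y) n) (f (S n))); auto.
Qed.

Lemma series_derive (f f' : nat -> R -> R) (M : nat -> R) (K0 : nat) (x0 d : R) :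
  0 < d ->
  (forall k y, Rabs (y - x0) < d -> is_derive (f k) y (f' k y)) ->
  (forall k y, (K0 <= k)%nat -> Rabs (y - x0) < d -> Rabs (f k y) <= M k /\ Rabs (f' k y) <= M k) ->
  ex_series M ->
  is_derive (fun y => Series (fun k => f k y)) x0 (Series (fun k => f' k x0)).
Proof.
  intros Hd Hf HM HMs.
  assert (Hx0 : Rabs (x0 - x0) < d) by (rewrite Rminus_diag, Rabs_R0; lra).
  apply (UL (fun n y => sum_f_R0 (fun k => f k y) n) (fun n y => sum_f_R0 (fun k => f' k y) n) _ _ x0 d Hd).
  - intros n y Hy. apply is_derive_sum_n. intros k. apply Hf; auto.
  - intros y Hy. eapply is_lim_seq_ext. intros n; apply sum_n_Reals.
    apply Series_correct. apply (ex_series_tail _ M K0); auto.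
    intros k Hk. apply (HM k y Hk Hy).
  - eapply is_lim_seq_ext. intros n; apply sum_n_Reals.
    apply Series_correct. apply (ex_series_tail _ M K0); auto.
    intros k Hk. apply (HM k x0 Hk Hx0).
  - intros eps Heps. destruct (Cauchy_ex_series M HMs (mkposreal eps Heps)) as [N HN].
    exists (S (max N K0)). intros n m y Hn Hm Hy.
    assert (Gen : forall n m, (S (max N K0) <= n)%nat -> (n <= m)%nat ->
       Rabs (sum_f_R0 (fun k => f' k y) m - sum_f_R0 (fun k => f' k y) n) <= eps).
    { clear n m Hn Hm. intros n m Hn Hnm.
      assert (E := sum_n_m_sum_n (fun k => f' k y) n m Hnm).
      rewrite !sum_n_Reals in E.
      change (minus (sum_f_R0 (fun k => f' k y) m) (sum_f_R0 (fun k => f' k y) n)) with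
        (sum_f_R0 (fun k => f' k y) m - sum_f_R0 (fun k => f' k y) n) in E.
      rewrite <- E.
      eapply Rle_trans. apply (sum_n_m_bound _ M K0). lia. intros k Hk. apply (HM k y Hk Hy).
      eapply Rle_trans. apply Rle_abs.
      assert (Hc := HN (S n) m ltac:(lia) ltac:(lia)). simpl in Hc. change (norm (sum_n_m M (S n) m)) with (Rabs (sum_n_m M (S n) m)) in Hc. lra. }
    destruct (Compare_dec.le_lt_dec n m) as [h|h].
    + rewrite Rabs_minus_sym. apply Gen; auto.
    + apply Gen; auto. lia.
Qed.

Lemma ln_le_m1 y : 0 < y -> ln y <= y - 1.
Proof. intros Hy. pose proof (exp_ineq1_le (ln y)). rewrite exp_ln in H; lra. Qed.

Lemma ln1p_le t : 0 <= t -> ln (1 + t) <= t.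
Proof. intros Ht. pose proof (ln_le_m1 (1+t)). lra. Qed.

Lemma ln1p_ge t : 0 <= t -> t / (1 + t) <= ln (1 + t).
Proof.
  intros Ht. pose proof (ln_le_m1 (/(1+t)) ltac:(apply Rinv_0_lt_compat; lra)).
  rewrite ln_Rinv in H by lra.
  assert (/(1+t) - 1 = - (t/(1+t))) by (field; lra). lra.
Qed.

Fixpoint lsum (s : R) (n : nat) : R :=
  match n with O => 0 | S m => lsum s m + ln (1 + s / INR (S m)) end.
Fixpoint hsum (n : nat) : R :=
  match n with O => 0 | S m => hsum m + / INR (S m) end.
Fixpoint dsum (s : R) (n : nat) : R :=
  match n with O => 0 | S m => dsum s m + / (s + INR (S m)) end.

Lemma hsum_S n : hsum (S n) = hsum n + / (INR n + 1).
Proof. change (hsum (S n)) with (hsum n + / INR (S n)). rewrite S_INR. reflexivity. Qed.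
Lemma lsum_S s n : lsum s (S n) = lsum s n + ln (1 + s / (INR n + 1)).
Proof. change (lsum s (S n)) with (lsum s n + ln (1 + s / INR (S n))). rewrite S_INR. reflexivity. Qed.
Lemma dsum_S s n : dsum s (S n) = dsum s n + / (s + (INR n + 1)).
Proof. change (dsum s (S n)) with (dsum s n + / (s + INR (S n))). rewrite S_INR. reflexivity. Qed.

Definition gam (n : nat) := hsum n - ln (INR n).
Definition esq (s : R) (n : nat) := lsum s n - s * hsum n.
Definition dsq (s : R) (n : nat) := dsum s n - hsum n.

Lemma gam_step k : (1 <= k)%nat -> 0 <= gam k - gam (S k) <= / INR k - / INR (S k).
Proof.
  intros Hk. unfold gam. rewrite hsum_S, S_INR.
  assert (Hk' : 1 <= INR k) by (apply (le_INR 1); auto).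
  assert (H1 := ln_le_m1 ((INR k + 1) / INR k) ltac:(apply Rdiv_lt_0_compat; lra)).
  assert (H2 := ln_le_m1 (INR k / (INR k + 1)) ltac:(apply Rdiv_lt_0_compat; lra)).
  rewrite ln_div in H1, H2 by lra.
  assert ((INR k + 1) / INR k - 1 = / INR k) by (field; lra).
  assert (INR k / (INR k + 1) - 1 = - / (INR k + 1)) by (field; lra).
  split; lra.
Qed.

Lemma gam_diff n m : (1 <= n)%nat -> (n <= m)%nat -> 0 <= gam n - gam m <= / INR n - / INR m.
Proof.
  intros Hn Hm. induction Hm.
  - lra.
  - assert (H := gam_step m ltac:(lia)). lra.
Qed.

Lemma gam_1 : gam 1 = 1.
Proof. unfold gam. simpl. rewrite ln_1. lra. Qed.

Lemma INR_pos n : (1 <= n)%nat -> 0 < INR n.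
Proof. intros. apply lt_0_INR. lia. Qed.

Lemma gam_bound n : (1 <= n)%nat -> 0 <= gam n <= 1.
Proof.
  intros Hn. assert (H := gam_diff 1 n ltac:(lia) Hn). rewrite gam_1 in H. simpl in H.
  assert (0 < / INR n) by (apply Rinv_0_lt_compat, INR_pos; auto). lra.
Qed.

Lemma esq_step s k : 0 <= s -> (1 <= k)%nat ->
  - (s * s) * (/ INR k - / INR (S k)) <= esq s (S k) - esq s k <= 0.
Proof.
  intros Hs Hk. unfold esq. rewrite lsum_S, hsum_S, S_INR.
  assert (Hk' : 1 <= INR k) by (apply (le_INR 1); auto).
  assert (Ht : 0 <= s / (INR k + 1)) by (apply Rdiv_le_0_compat; lra).
  assert (H1 := ln1p_le _ Ht). assert (H2 := ln1p_ge _ Ht).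
  set (t := s / (INR k + 1)) in *.
  assert (E : t / (1 + t) - t = - (t * t) / (1 + t)) by (field; lra).
  assert (E2 : / INR k - / (INR k + 1) = / (INR k * (INR k + 1))) by (field; lra).
  rewrite E2.
  assert (t * t / (1 + t) <= s * s * / (INR k * (INR k + 1))).
  { assert (Ha : t * t / (1 + t) <= t * t).
    { apply (Rmult_le_reg_r (1 + t)). lra.
      replace (t * t / (1 + t) * (1 + t)) with (t * t) by (field; lra). nra. }
    assert (Hb : t * t <= s * s * / (INR k * (INR k + 1))).
    { replace (t * t) with (s * s * / ((INR k + 1) * (INR k + 1))) by (unfold t; field; lra).
      apply Rmult_le_compat_l. nra. apply Rinv_le_contravar. nra. nra. }
    lra. }
  assert (s * (hsum k + / (INR k + 1)) = s * hsum k + t) by (unfold t; field; lra).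
  assert (- (t*t) / (1+t) = - (t * t / (1 + t))) by (field; lra).
  assert (- (s * s) * / (INR k * (INR k + 1)) = - (s * s * / (INR k * (INR k + 1)))) by ring.
  split; lra.
Qed.

Lemma esq_diff s n m : 0 <= s -> (1 <= n)%nat -> (n <= m)%nat ->
  0 <= esq s n - esq s m <= s * s * (/ INR n - / INR m).
Proof.
  intros Hs Hn Hm. induction Hm.
  - nra.
  - assert (H := esq_step s m Hs ltac:(lia)). nra.
Qed.

Lemma esq_le0 s n : 0 <= s -> esq s n <= 0.
Proof.
  intros Hs. destruct n.
  - unfold esq. simpl. lra.
  - assert (H1 : esq s 1 <= 0).
    { unfold esq. rewrite lsum_S, hsum_S. simpl. 
      replace (s / (0 + 1)) with s by field. replace (/ (0 + 1)) with 1 by field.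
      pose proof (ln1p_le s Hs). lra. }
    assert (H := esq_diff s 1 (S n) Hs ltac:(lia) ltac:(lia)). lra.
Qed.

Lemma dsq_step s k : 0 <= s -> (1 <= k)%nat ->
  - s * (/ INR k - / INR (S k)) <= dsq s (S k) - dsq s k <= 0.
Proof.
  intros Hs Hk. unfold dsq. rewrite dsum_S, hsum_S, S_INR.
  assert (Hk' : 1 <= INR k) by (apply (le_INR 1); auto).
  replace (dsum s k + / (s + (INR k + 1)) - (hsum k + / (INR k + 1)) - (dsum s k - hsum k))
    with (- (s / ((INR k + 1) * (s + INR k + 1)))) by (field; lra).
  replace (- s * (/ INR k - / (INR k + 1))) with (- (s / (INR k * (INR k + 1)))) by (field; lra).
  assert (0 <= s / ((INR k + 1) * (s + INR k + 1))) by (apply Rdiv_le_0_compat; nra).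
  assert (s / ((INR k + 1) * (s + INR k + 1)) <= s / (INR k * (INR k + 1))).
  { unfold Rdiv. apply Rmult_le_compat_l; auto. apply Rinv_le_contravar; nra. }
  lra.
Qed.

Lemma dsq_diff s n m : 0 <= s -> (1 <= n)%nat -> (n <= m)%nat ->
  0 <= dsq s n - dsq s m <= s * (/ INR n - / INR m).
Proof.
  intros Hs Hn Hm. induction Hm.
  - nra.
  - assert (H := dsq_step s m Hs ltac:(lia)). nra.
Qed.

Lemma dsq_bound s n : 0 <= s -> (1 <= n)%nat -> - (2 * s) <= dsq s n <= 0.
Proof.
  intros Hs Hn.
  assert (H1 : - s <= dsq s 1 <= 0).
  { unfold dsq. rewrite dsum_S, hsum_S. simpl.
    replace (0 + / (s + (0 + 1)) - (0 + / (0 + 1))) with (- (s / (s + 1))) by (field; lra).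
    split.
    - assert (s/(s+1) <= s) by (apply (Rmult_le_reg_r (s+1)); [lra|];
        replace (s/(s+1)*(s+1)) with s by (field; lra); nra). lra.
    - assert (0 <= s / (s+1)) by (apply Rdiv_le_0_compat; lra). lra. }
  assert (H := dsq_diff s 1 n Hs ltac:(lia) Hn). simpl in H.
  assert (0 < / INR n) by (apply Rinv_0_lt_compat, INR_pos; auto).
  replace (/ 1) with 1 in H by field. nra.
Qed.

Definition ell (s : R) (n : nat) := ln s + lsum s n - s * ln (INR n).
Definition Dn (s : R) (n : nat) := / s + dsum s n - ln (INR n).

Lemma ell_eq s n : ell s n = ln s + esq s n + s * gam n.
Proof. unfold ell, esq, gam. ring. Qed.
Lemma Dn_eq s n : Dn s n = / s + dsq s n + gam n.
Proof. unfold Dn, dsq, gam. ring. Qed.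

Lemma inv_anti n m : (1 <= n)%nat -> (n <= m)%nat -> 0 < / INR m <= / INR n.
Proof.
  intros Hn Hm. split. apply Rinv_0_lt_compat, INR_pos; lia.
  apply Rinv_le_contravar. apply INR_pos; auto. apply le_INR; auto.
Qed.

Lemma ell_cauchy s N n m : 0 <= s -> (1 <= N)%nat -> (N <= n)%nat -> (N <= m)%nat ->
  Rabs (ell s n - ell s m) <= (s * s + s) / INR N.
Proof.
  intros Hs HN Hn Hm.
  assert (G : forall n m, (N <= n)%nat -> (n <= m)%nat -> Rabs (ell s n - ell s m) <= (s * s + s) / INR N).
  { clear n m Hn Hm. intros n m Hn Hm. rewrite !ell_eq.
    assert (E := esq_diff s n m Hs ltac:(lia) Hm).
    assert (G1 := gam_diff n m ltac:(lia) Hm).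
    assert (I1 := inv_anti N n HN Hn). assert (I2 := inv_anti n m ltac:(lia) Hm).
    unfold Rdiv. apply Rabs_le. split; nra. }
  destruct (Compare_dec.le_lt_dec n m) as [h|h].
  - apply G; auto.
  - rewrite Rabs_minus_sym. apply G; auto. lia.
Qed.

Lemma Dn_cauchy s N n m : 0 <= s -> (1 <= N)%nat -> (N <= n)%nat -> (N <= m)%nat ->
  Rabs (Dn s n - Dn s m) <= (s + 1) / INR N.
Proof.
  intros Hs HN Hn Hm.
  assert (G : forall n m, (N <= n)%nat -> (n <= m)%nat -> Rabs (Dn s n - Dn s m) <= (s + 1) / INR N).
  { clear n m Hn Hm. intros n m Hn Hm. rewrite !Dn_eq.
    assert (E := dsq_diff s n m Hs ltac:(lia) Hm).
    assert (G1 := gam_diff n m ltac:(lia) Hm).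
    assert (I1 := inv_anti N n HN Hn). assert (I2 := inv_anti n m ltac:(lia) Hm).
    unfold Rdiv. apply Rabs_le. split; nra. }
  destruct (Compare_dec.le_lt_dec n m) as [h|h].
  - apply G; auto.
  - rewrite Rabs_minus_sym. apply G; auto. lia.
Qed.

Lemma small_N C eps : 0 <= C -> 0 < eps -> exists N, (1 <= N)%nat /\ C / INR N < eps.
Proof.
  intros HC He. destruct (INR_unbounded (C / eps)) as [N HN].
  exists (S N). split. lia. rewrite S_INR.
  assert (0 <= INR N) by apply pos_INR.
  apply (Rmult_lt_reg_r (INR N + 1)). lra.
  replace (C / (INR N + 1) * (INR N + 1)) with C by (field; lra).
  assert (C / eps * eps = C) by (field; lra).
  assert (C / eps < INR N + 1) by lra.
  nra.
Qed.

Definition ellL (s : R) := real (Lim_seq (ell s)).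
Definition DL (s : R) := real (Lim_seq (Dn s)).

Lemma ell_lim s : 0 <= s -> is_lim_seq (ell s) (ellL s).
Proof.
  intros Hs. apply Lim_seq_correct'. apply ex_lim_seq_cauchy_corr.
  intros eps. destruct (small_N (s * s + s) eps) as [N [HN1 HN2]]. nra. apply cond_pos.
  exists N. intros n m Hn Hm. eapply Rle_lt_trans. apply (ell_cauchy s N); auto. auto.
Qed.

Lemma Dn_lim s : 0 <= s -> is_lim_seq (Dn s) (DL s).
Proof.
  intros Hs. apply Lim_seq_correct'. apply ex_lim_seq_cauchy_corr.
  intros eps. destruct (small_N (s + 1) eps) as [N [HN1 HN2]]. nra. apply cond_pos.
  exists N. intros n m Hn Hm. eapply Rle_lt_trans. apply (Dn_cauchy s N); auto. auto.
Qed.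

Lemma lsum_derive s n : 0 < s -> is_derive (fun s => lsum s n) s (dsum s n).
Proof.
  intros Hs. induction n.
  - simpl. apply (@is_derive_const R_AbsRing R_NormedModule).
  - apply (is_derive_ext (fun s => lsum s n + ln (1 + s / (INR n + 1)))).
    intros t. symmetry. apply lsum_S.
    rewrite dsum_S.
    apply (is_derive_plus (fun s => lsum s n) (fun s => ln (1 + s / (INR n + 1)))). auto.
    assert (0 <= INR n) by apply pos_INR.
    auto_derive. apply Rplus_lt_le_0_compat. lra. apply Rdiv_le_0_compat; lra.
    field. lra.
Qed.

Lemma ell_derive s n : 0 < s -> is_derive (fun s => ell s n) s (Dn s n).
Proof.
  intros Hs. unfold ell, Dn.
  apply (is_derive_minus (fun s => ln s + lsum s n) (fun s => s * ln (INR n))).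
  apply (is_derive_plus ln (fun s => lsum s n)).
  apply is_derive_Reals, derivable_pt_lim_ln; auto.
  apply lsum_derive; auto.
  auto_derive. auto. ring.
Qed.

Lemma ellL_derive s0 : 0 < s0 -> is_derive ellL s0 (DL s0).
Proof.
  intros Hs0.
  apply (UL (fun n y => ell y (S n)) (fun n y => Dn y (S n)) ellL (DL s0) s0 (s0/2)).
  - lra.
  - intros n y Hy. apply Rabs_def2 in Hy. apply ell_derive. lra.
  - intros y Hy. apply Rabs_def2 in Hy. apply (is_lim_seq_incr_1 (ell y)). apply ell_lim. lra.
  - apply (is_lim_seq_incr_1 (Dn s0)). apply Dn_lim. lra.
  - intros eps Heps. destruct (small_N (2 * s0 + 1) eps) as [N [HN1 HN2]]; try lra.
    exists N. intros n m y Hn Hm Hy. apply Rabs_def2 in Hy.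
    eapply Rle_trans. apply (Dn_cauchy y N); try lia; lra.
    apply Rlt_le. eapply Rle_lt_trans; [|apply HN2].
    unfold Rdiv. apply Rmult_le_compat_r. apply Rlt_le, Rinv_0_lt_compat, INR_pos; auto. lra.
Qed.

Definition pn (s : R) (n : nat) :=
  prod_f_R0 (fun k => s + INR k) n / (INR (Factorial.fact n) * Rpower (INR n) s).

Lemma rgamma_pn s : rgamma s = real (Lim_seq (pn s)).
Proof. reflexivity. Qed.

Lemma prod_fact s n : 0 < s ->
  prod_f_R0 (fun k => s + INR k) n / INR (Factorial.fact n) = s * exp (lsum s n).
Proof.
  intros Hs. induction n.
  - simpl. rewrite exp_0. field.
  - rewrite lsum_S, exp_plus, exp_ln.
    2: { assert (0 <= INR n) by apply pos_INR. assert (0 <= s / (INR n + 1)) by (apply Rdiv_le_0_compat; lra). lra. }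
    change (prod_f_R0 (fun k => s + INR k) (S n)) with (prod_f_R0 (fun k => s + INR k) n * (s + INR (S n))).
    rewrite fact_simpl, mult_INR, S_INR.
    assert (0 <= INR n) by apply pos_INR.
    assert (INR (Factorial.fact n) <> 0) by apply INR_fact_neq_0.
    rewrite <- Rmult_assoc, <- IHn. field. lra.
Qed.

Lemma pn_exp s n : 0 < s -> (1 <= n)%nat -> pn s n = exp (ell s n).
Proof.
  intros Hs Hn. unfold pn, ell, Rpower.
  assert (INR (Factorial.fact n) <> 0) by apply INR_fact_neq_0.
  assert (E : prod_f_R0 (fun k => s + INR k) n / (INR (Factorial.fact n) * exp (s * ln (INR n)))
     = (prod_f_R0 (fun k => s + INR k) n / INR (Factorial.fact n)) / exp (s * ln (INR n))).
  { field. split; auto. apply Rgt_not_eq, exp_pos. }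
  rewrite E, prod_fact; auto.
  unfold Rminus. rewrite !exp_plus, exp_Ropp, exp_ln; auto.
Qed.

Lemma pn_lim_pos s : 0 < s -> is_lim_seq (pn s) (exp (ellL s)).
Proof.
  intros Hs. apply is_lim_seq_incr_1.
  apply (is_lim_seq_ext (fun n => exp (ell s (S n)))).
  { intros n. rewrite pn_exp; auto. lia. }
  apply (is_lim_seq_continuous exp (fun n => ell s (S n))).
  apply derivable_continuous_pt, derivable_pt_exp.
  apply (is_lim_seq_incr_1 (ell s)). apply ell_lim. lra.
Qed.

Lemma prod_shift s n :
  prod_f_R0 (fun k => s + 1 + INR k) n * s = prod_f_R0 (fun k => s + INR k) n * (s + INR n + 1).
Proof.
  induction n.
  - simpl. ring.
  - change (prod_f_R0 (fun k => s + 1 + INR k) (S n)) with (prod_f_R0 (fun k => s + 1 + INR k) n * (s + 1 + INR (S n))).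
    change (prod_f_R0 (fun k => s + INR k) (S n)) with (prod_f_R0 (fun k => s + INR k) n * (s + INR (S n))).
    rewrite S_INR.
    transitivity (prod_f_R0 (fun k => s + 1 + INR k) n * s * (s + 1 + (INR n + 1))). ring.
    rewrite IHn. ring.
Qed.

Lemma pn_rec s n : (1 <= n)%nat -> s + INR n + 1 <> 0 ->
  pn s n = s * pn (s + 1) n * (INR n / (s + INR n + 1)).
Proof.
  intros Hn Hs. unfold pn.
  assert (0 < INR n) by (apply INR_pos; auto).
  rewrite Rpower_plus, Rpower_1 by auto.
  assert (INR (Factorial.fact n) <> 0) by apply INR_fact_neq_0.
  assert (0 < Rpower (INR n) s) by apply exp_pos.
  assert (E := prod_shift s n).
  apply (Rmult_eq_reg_r (INR (Factorial.fact n) * Rpower (INR n) s * (s + INR n + 1))).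
  2: { apply Rmult_integral_contrapositive; split; [apply Rmult_integral_contrapositive; split|]; lra. }
  field_simplify; try (repeat split; lra).
Qed.

Lemma lim_ratio a : is_lim_seq (fun n => INR n / (a + INR n + 1)) 1.
Proof.
  destruct (INR_unbounded (Rabs a + 1)) as [N HN].
  apply (is_lim_seq_ext_loc (fun n => 1 - (a + 1) * / (a + INR n + 1))).
  { exists N. intros n Hn. assert (INR N <= INR n) by (apply le_INR; auto).
    assert (a + INR n + 1 <> 0). { pose proof (Rle_abs (-a)). rewrite Rabs_Ropp in H0. lra. }
    field. auto. }
  assert (Hm : forall l, l = 1 - (a + 1) * 0 -> is_lim_seq (fun n => 1 - (a + 1) * / (a + INR n + 1)) l).
  2: { apply Hm. ring. }
  intros l ->.
  apply (is_lim_seq_minus' (fun _ => 1)). apply is_lim_seq_const.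
  apply (is_lim_seq_scal_l (fun n => / (a + INR n + 1)) (a + 1) 0).
  replace (Finite 0) with (Rbar_inv p_infty) by reflexivity.
  apply is_lim_seq_inv. 2: discriminate.
  apply (is_lim_seq_plus (fun n => a + INR n) (fun _ => 1) p_infty 1).
  - apply (is_lim_seq_plus (fun _ => a) INR a p_infty).
    + apply is_lim_seq_const.
    + apply is_lim_seq_INR.
    + reflexivity.
  - apply is_lim_seq_const.
  - reflexivity.
Qed.

Lemma pn_step (s l : R) : is_lim_seq (pn (s + 1)) l -> is_lim_seq (pn s) (s * l).
Proof.
  intros H.
  destruct (INR_unbounded (Rabs s + 1)) as [N HN].
  apply (is_lim_seq_ext_loc (fun n => s * pn (s + 1) n * (INR n / (s + INR n + 1)))).
  { exists (S N). intros n Hn. assert (INR N <= INR n) by (apply le_INR; lia).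
    symmetry. apply pn_rec. lia.
    pose proof (Rle_abs (-s)). rewrite Rabs_Ropp in H1. lra. }
  assert (Hm : forall l', l' = s * l * 1 -> is_lim_seq (fun n => s * pn (s + 1) n * (INR n / (s + INR n + 1))) l').
  2: { apply Hm. ring. }
  intros l' ->. apply is_lim_seq_mult'. 2: apply lim_ratio.
  apply (is_lim_seq_scal_l _ s l). auto.
Qed.

Lemma rg_eq_pos s : 0 < s -> rgamma s = exp (ellL s).
Proof.
  intros Hs. rewrite rgamma_pn. rewrite (is_lim_seq_unique _ _ (pn_lim_pos s Hs)). reflexivity.
Qed.

Lemma rg_lim_m m : forall s, - INR m < s -> is_lim_seq (pn s) (rgamma s).
Proof.
  induction m; intros s Hs.
  - simpl in Hs. rewrite rg_eq_pos by lra. apply pn_lim_pos. lra.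
  - rewrite S_INR in Hs. assert (H := pn_step s _ (IHm (s + 1) ltac:(lra))).
    rewrite rgamma_pn. rewrite (is_lim_seq_unique _ _ H). simpl. auto.
Qed.

Lemma rg_lim s : is_lim_seq (pn s) (rgamma s).
Proof.
  destruct (INR_unbounded (- s)) as [m Hm]. apply (rg_lim_m m). lra.
Qed.

Lemma rg_rec s : rgamma s = s * rgamma (s + 1).
Proof.
  assert (H := pn_step s _ (rg_lim (s + 1))).
  rewrite rgamma_pn, (is_lim_seq_unique _ _ H). reflexivity.
Qed.

Lemma rg_derive_pos s : 0 < s -> is_derive rgamma s (exp (ellL s) * DL s).
Proof.
  intros Hs.
  apply (is_derive_ext_loc (fun y => exp (ellL y))).
  { exists (mkposreal s Hs). intros y Hy. change (Rabs (y - s) < s) in Hy.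
    apply Rabs_def2 in Hy. symmetry. apply rg_eq_pos. lra. }
  replace (exp (ellL s) * DL s) with (scal (DL s) (exp (ellL s))) by (unfold scal; simpl; unfold mult; simpl; ring).
  apply (is_derive_comp exp ellL s (exp (ellL s)) (DL s)).
  apply is_derive_Reals, derivable_pt_lim_exp.
  apply ellL_derive; auto.
Qed.

Lemma rg_ex_derive_m m : forall s, - INR m < s -> ex_derive rgamma s.
Proof.
  induction m; intros s Hs.
  - simpl in Hs. eexists. apply rg_derive_pos. lra.
  - rewrite S_INR in Hs. assert (H := IHm (s + 1) ltac:(lra)).
    apply (ex_derive_ext (fun y => y * rgamma (y + 1))).
    { intros t. symmetry. apply rg_rec. }
    auto_derive. auto.
Qed.

Lemma rg_ex_derive s : ex_derive rgamma s.
Proof.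
  destruct (INR_unbounded (- s)) as [m Hm]. apply (rg_ex_derive_m m). lra.
Qed.

Lemma lim_le_const (u : nat -> R) (l C : R) (N : nat) :
  is_lim_seq u l -> (forall n, (N <= n)%nat -> u n <= C) -> l <= C.
Proof.
  intros Hl H. assert (Hc := is_lim_seq_const C).
  assert (R := is_lim_seq_le_loc u (fun _ => C) l C).
  simpl in R. apply R; auto. exists N. auto.
Qed.

Lemma lim_ge_const (u : nat -> R) (l C : R) (N : nat) :
  is_lim_seq u l -> (forall n, (N <= n)%nat -> C <= u n) -> C <= l.
Proof.
  intros Hl H. assert (Hc := is_lim_seq_const C).
  assert (R := is_lim_seq_le_loc (fun _ => C) u C l).
  simpl in R. apply R; auto. exists N. auto.
Qed.

Lemma ellL_le s : 0 < s -> ellL s <= ln s + s.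
Proof.
  intros Hs. apply (lim_le_const (ell s) _ _ 1). apply ell_lim. lra.
  intros n Hn. rewrite ell_eq. assert (H1 := esq_le0 s n ltac:(lra)).
  assert (H2 := gam_bound n Hn). nra.
Qed.

Lemma DL_bound s : 0 < s -> Rabs (DL s) <= / s + 1 + 2 * s.
Proof.
  intros Hs. assert (Hl := Dn_lim s ltac:(lra)).
  assert (0 < / s) by (apply Rinv_0_lt_compat; auto).
  apply Rabs_le. split.
  - apply (lim_ge_const (Dn s) _ _ 1); auto. intros n Hn. rewrite Dn_eq.
    assert (H1 := dsq_bound s n ltac:(lra) Hn). assert (H2 := gam_bound n Hn). lra.
  - apply (lim_le_const (Dn s) _ _ 1); auto. intros n Hn. rewrite Dn_eq.
    assert (H1 := dsq_bound s n ltac:(lra) Hn). assert (H2 := gam_bound n Hn). lra.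
Qed.

Lemma rg_bound s : 0 < s -> 0 < rgamma s <= s * exp s.
Proof.
  intros Hs. rewrite rg_eq_pos by auto. split. apply exp_pos.
  rewrite <- (exp_ln s) at 2 by auto. rewrite <- exp_plus.
  destruct (Req_dec (ellL s) (ln s + s)) as [e|e]. rewrite e; lra.
  left. apply exp_increasing. pose proof (ellL_le s Hs). lra.
Qed.

Lemma rg_dbound s : 0 < s -> Rabs (Derive rgamma s) <= exp s * (1 + s + 2 * s * s).
Proof.
  intros Hs. rewrite (is_derive_unique _ _ _ (rg_derive_pos s Hs)).
  rewrite <- rg_eq_pos by auto. rewrite Rabs_mult.
  assert (H1 := rg_bound s Hs). assert (H2 := DL_bound s Hs).
  rewrite Rabs_right by lra.
  apply Rle_trans with (s * exp s * (/ s + 1 + 2 * s)).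
  apply Rmult_le_compat; auto; try lra. apply Rabs_pos.
  right. field. lra.
Qed.

Lemma rg_0 : rgamma 0 = 0.
Proof. rewrite rg_rec. ring. Qed.

Lemma rg_1 : rgamma 1 = 1.
Proof.
  assert (H : is_lim_seq (pn 1) 1).
  { apply (is_lim_seq_ext_loc (fun n => (INR n + 1) / INR n)).
    { exists 1%nat. intros n Hn. unfold pn. rewrite Rpower_1 by (apply INR_pos; auto).
      assert (E : forall n, prod_f_R0 (fun k => 1 + INR k) n = INR (Factorial.fact (S n))).
      { induction n0. simpl. ring.
        change (prod_f_R0 (fun k => 1 + INR k) (S n0)) with (prod_f_R0 (fun k => 1 + INR k) n0 * (1 + INR (S n0))).
        rewrite IHn0. rewrite (fact_simpl (S n0)), mult_INR. rewrite !S_INR. ring. }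
      rewrite E, fact_simpl, mult_INR, S_INR.
      assert (INR (Factorial.fact n) <> 0) by apply INR_fact_neq_0.
      assert (INR n <> 0) by (apply Rgt_not_eq, INR_pos; auto).
      field. auto. }
    apply (is_lim_seq_ext_loc (fun n => 1 + / INR n)).
    { exists 1%nat. intros n Hn. field. apply Rgt_not_eq, INR_pos; auto. }
    assert (Hm : forall l, l = 1 + 0 -> is_lim_seq (fun n => 1 + / INR n) l).
    2: { apply Hm. ring. }
    intros l ->. apply (is_lim_seq_plus' (fun _ => 1)). apply is_lim_seq_const.
    replace (Finite 0) with (Rbar_inv p_infty) by reflexivity.
    apply is_lim_seq_inv. apply is_lim_seq_INR. discriminate. }
  rewrite rgamma_pn, (is_lim_seq_unique _ _ H). reflexivity.
Qed.

Lemma rg_fact m : rgamma (INR m + 1) = / INR (Factorial.fact m).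
Proof.
  induction m.
  - simpl. rewrite Rplus_0_l, rg_1. field.
  - rewrite S_INR. rewrite (rg_rec (INR m + 1)) in IHm.
    rewrite fact_simpl, mult_INR, S_INR.
    assert (INR (Factorial.fact m) <> 0) by apply INR_fact_neq_0.
    assert (0 <= INR m) by apply pos_INR.
    apply (Rmult_eq_reg_l (INR m + 1)). rewrite IHm. field. split; auto; lra. lra.
Qed.

Lemma rg_negint m : rgamma (- INR m) = 0.
Proof.
  induction m.
  - simpl. rewrite Ropp_0. apply rg_0.
  - rewrite S_INR, rg_rec. replace (- (INR m + 1) + 1) with (- INR m) by ring.
    rewrite IHm. ring.
Qed.

Lemma ex_series_expo (R0 : R) : ex_series (fun k => R0 ^ k / INR (Factorial.fact k)).
Proof.
  assert (H := is_exp_Reals R0).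
  apply (ex_series_ext (fun k => scal (pow_n R0 k) (/ INR (Factorial.fact k)))).
  { intros n. rewrite pow_n_pow. reflexivity. }
  eexists. apply H.
Qed.

Lemma exp_nat a k : exp (INR k * a) = exp a ^ k.
Proof.
  induction k. simpl. rewrite Rmult_0_l, exp_0. reflexivity.
  rewrite S_INR, Rmult_plus_distr_r, exp_plus, Rmult_1_l, IHk. simpl. ring.
Qed.

Lemma exp_mono a b : a <= b -> exp a <= exp b.
Proof. intros H. destruct (Req_dec a b) as [e|e]. rewrite e; lra. left. apply exp_increasing. lra. Qed.

Lemma rg_bound4 t : 0 < t -> Rabs (rgamma t) <= 4 * exp (3 * t) /\ Rabs (Derive rgamma t) <= 4 * exp (3 * t).
Proof.
  intros Ht. assert (H1 := rg_bound t Ht). assert (H2 := rg_dbound t Ht).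
  assert (E1 := exp_ineq1_le t).
  assert (E3 : exp (3 * t) = exp t * exp t * exp t) by (rewrite <- !exp_plus; f_equal; ring).
  assert (0 < exp t) by apply exp_pos.
  assert (1 <= exp t) by (pose proof (exp_ineq1_le t); lra).
  split.
  - rewrite Rabs_right by lra. rewrite E3. nra.
  - eapply Rle_trans. apply H2. rewrite E3.
    assert (t * t <= exp t * exp t) by nra.
    assert (1 + t + 2 * t * t <= 4 * (exp t * exp t)) by nra. nra.
Qed.

Definition ck (x mu : R) (k : nat) :=
  rgamma (mu + INR k + 1) / INR (Factorial.fact k) * exp ((mu + 2 * INR k) * ln (x / 2)).
Definition thk (mu : R) (k : nat) := (mu + 2 * INR k) * (PI / 4).

Definition dck (x mu : R) (k : nat) :=
  (Derive rgamma (mu + INR k + 1) + rgamma (mu + INR k + 1) * ln (x / 2)) / INR (Factorial.fact k)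
    * exp ((mu + 2 * INR k) * ln (x / 2)).

Lemma ck_derive x mu k : is_derive (fun mu => ck x mu k) mu (dck x mu k).
Proof.
  unfold ck, dck. assert (H := rg_ex_derive (mu + INR k + 1)).
  assert (INR (Factorial.fact k) <> 0) by apply INR_fact_neq_0.
  auto_derive. auto. change (fun x0 : R => rgamma x0) with rgamma. field. auto.
Qed.

Section Phase.
Variable phi phi' : R -> R.
Hypothesis Hphi : forall y, is_derive phi y (phi' y).
Hypothesis Hb : forall y, Rabs (phi y) <= 1.
Hypothesis Hb' : forall y, Rabs (phi' y) <= 1.

Definition tk (x mu : R) (k : nat) := ck x mu k * phi (thk mu k).
Definition dtk (x mu : R) (k : nat) := dck x mu k * phi (thk mu k) + ck x mu k * (phi' (thk mu k) * (PI / 4)).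

Lemma tk_derive x mu k : is_derive (fun mu => tk x mu k) mu (dtk x mu k).
Proof.
  unfold tk, dtk.
  apply (is_derive_mult (fun mu => ck x mu k) (fun mu => phi (thk mu k))).
  apply ck_derive.
  unfold thk.
  replace (phi' ((mu + 2 * INR k) * (PI / 4)) * (PI / 4)) with
    (scal (PI / 4) (phi' ((mu + 2 * INR k) * (PI / 4)))) by (unfold scal; simpl; unfold mult; simpl; ring).
  apply (is_derive_comp phi (fun mu => (mu + 2 * INR k) * (PI / 4))). apply Hphi.
  auto_derive. auto. ring.
  intros; apply Rmult_comm.
Qed.

Lemma tk_bounds x mu0 : exists M K0, ex_series M /\
  forall k mu, (K0 <= k)%nat -> Rabs (mu - mu0) < 1 ->
    Rabs (tk x mu k) <= M k /\ Rabs (dtk x mu k) <= M k.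
Proof.
  set (L := ln (x / 2)). set (P := Rabs mu0 + 2).
  destruct (INR_unbounded (Rabs mu0 + 1)) as [K0 HK0].
  exists (fun k => 4 * (2 + Rabs L) * exp (3 * P + P * Rabs L) * (exp (3 + 2 * Rabs L) ^ k / INR (Factorial.fact k))).
  exists K0. split.
  { set (C := 4 * (2 + Rabs L) * exp (3 * P + P * Rabs L)).
    apply (ex_series_ext (fun k => scal C (exp (3 + 2 * Rabs L) ^ k / INR (Factorial.fact k)))).
    reflexivity. apply (@ex_series_scal_l R_AbsRing R_NormedModule). apply ex_series_expo. }
  intros k mu Hk Hmu.
  assert (HkR : INR K0 <= INR k) by (apply le_INR; auto).
  apply Rabs_def2 in Hmu.
  assert (Habs0 := Rle_abs mu0). assert (Habs1 := Rle_abs (- mu0)). rewrite Rabs_Ropp in Habs1.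
  assert (Hmuabs : Rabs mu <= Rabs mu0 + 1).
  { replace mu with (mu0 + (mu - mu0)) by ring. eapply Rle_trans. apply Rabs_triang.
    apply Rplus_le_compat_l. apply Rabs_le; lra. }
  set (t := mu + INR k + 1).
  assert (Ht : 0 < t) by (unfold t; lra).
  assert (Ht2 : t <= P + INR k) by (unfold t, P; lra).
  destruct (rg_bound4 t Ht) as [B1 B2].
  set (E := exp ((mu + 2 * INR k) * L)).
  assert (HE : 0 < E) by apply exp_pos.
  assert (HE2 : E <= exp ((P + 2 * INR k) * Rabs L)).
  { unfold E. apply exp_mono.
    eapply Rle_trans. apply Rle_abs. rewrite Rabs_mult.
    apply Rmult_le_compat_r. apply Rabs_pos.
    eapply Rle_trans. apply Rabs_triang. rewrite Rabs_mult, (Rabs_right 2) by lra.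
    rewrite (Rabs_right (INR k)) by (apply Rle_ge, pos_INR). unfold P. lra. }
  set (F := INR (Factorial.fact k)).
  assert (HF : 0 < F) by (apply INR_fact_lt_0).
  set (G := 4 * exp (3 * t) * E / F).
  assert (HG : G <= 4 * exp (3 * P + P * Rabs L) * (exp (3 + 2 * Rabs L) ^ k / F)).
  { replace (4 * exp (3 * P + P * Rabs L) * (exp (3 + 2 * Rabs L) ^ k / F))
      with (4 * (exp (3 * P + P * Rabs L + INR k * (3 + 2 * Rabs L))) / F)
      by (rewrite exp_plus, exp_nat; field; lra).
    unfold G, Rdiv. apply Rmult_le_compat_r. left; apply Rinv_0_lt_compat; auto.
    rewrite Rmult_assoc. apply Rmult_le_compat_l. lra.
    apply Rle_trans with (exp (3 * t) * exp ((P + 2 * INR k) * Rabs L)).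
    apply Rmult_le_compat_l. left; apply exp_pos. apply HE2.
    rewrite <- exp_plus. apply exp_mono.
    assert (0 <= Rabs L) by apply Rabs_pos. nra. }
  assert (Hck : Rabs (ck x mu k) <= G).
  { unfold ck, G. fold L. fold t. fold E. fold F.
    rewrite Rabs_mult, Rabs_div by lra. rewrite (Rabs_right E) by lra. rewrite (Rabs_right F) by lra.
    assert (0 < / F) by (apply Rinv_0_lt_compat; auto).
    unfold Rdiv. apply Rle_trans with (4 * exp (3 * t) * / F * E).
    apply Rmult_le_compat_r. lra. apply Rmult_le_compat_r. lra. auto. right. ring. }
  assert (Hdck : Rabs (dck x mu k) <= G * (1 + Rabs L)).
  { unfold dck, G. fold L. fold t. fold E. fold F.
    rewrite Rabs_mult, Rabs_div by lra. rewrite (Rabs_right E) by lra. rewrite (Rabs_right F) by lra.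
    assert (Rabs (Derive rgamma t + rgamma t * L) <= 4 * exp (3 * t) * (1 + Rabs L)).
    { eapply Rle_trans. apply Rabs_triang. rewrite Rabs_mult.
      assert (0 <= Rabs L) by apply Rabs_pos. nra. }
    assert (0 < / F) by (apply Rinv_0_lt_compat; auto).
    unfold Rdiv. 
    apply Rle_trans with (4 * exp (3 * t) * (1 + Rabs L) * / F * E).
    apply Rmult_le_compat_r. lra. apply Rmult_le_compat_r. lra. auto.
    right. ring. }
  assert (HG0 : 0 <= G) by (eapply Rle_trans; [apply Rabs_pos|apply Hck]).
  assert (HL0 : 0 <= Rabs L) by apply Rabs_pos.
  assert (HPI : PI / 4 <= 1) by (pose proof PI_4; lra).
  assert (HPI0 : 0 < PI / 4) by (pose proof PI_RGT_0; lra).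
  assert (Hf : Rabs (tk x mu k) <= G).
  { unfold tk. rewrite Rabs_mult. specialize (Hb (thk mu k)). 
    assert (0 <= Rabs (ck x mu k)) by apply Rabs_pos. nra. }
  assert (Hf' : Rabs (dtk x mu k) <= G * (2 + Rabs L)).
  { unfold dtk. eapply Rle_trans. apply Rabs_triang. rewrite !Rabs_mult.
    specialize (Hb (thk mu k)). specialize (Hb' (thk mu k)).
    rewrite (Rabs_right (PI/4)) by lra.
    assert (0 <= Rabs (ck x mu k)) by apply Rabs_pos.
    assert (0 <= Rabs (dck x mu k)) by apply Rabs_pos.
    assert (0 <= Rabs (phi' (thk mu k))) by apply Rabs_pos.
    assert (0 <= Rabs (phi (thk mu k))) by apply Rabs_pos.
    assert (Rabs (dck x mu k) * Rabs (phi (thk mu k)) <= G * (1 + Rabs L)) by nra.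
    assert (Rabs (phi' (thk mu k)) * (PI / 4) <= 1) by nra.
    assert (Rabs (ck x mu k) * (Rabs (phi' (thk mu k)) * (PI / 4)) <= G) by nra.
    nra. }
  fold F. split; nra.
Qed.

Lemma tk_series_derive x mu0 :
  is_derive (fun mu => Series (fun k => tk x mu k)) mu0 (Series (fun k => dtk x mu0 k)).
Proof.
  destruct (tk_bounds x mu0) as [M [K0 [HM HB]]].
  apply (series_derive (fun k y => tk x y k) (fun k y => dtk x y k) M K0 mu0 1). lra.
  intros k y _. apply (tk_derive x y k).
  intros k y Hk Hy. apply HB; auto. auto.
Qed.

Lemma tk_ex_series x mu : ex_series (fun k => tk x mu k).
Proof.
  destruct (tk_bounds x mu) as [M [K0 [HM HB]]].
  apply (ex_series_tail _ M K0); auto.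
  intros k Hk. apply (HB k mu Hk). rewrite Rminus_diag, Rabs_R0. lra.
Qed.

End Phase.

Definition rr (x : R) := x / (2 * sqrt 2).

Lemma sqrt2_pos : 0 < sqrt 2.
Proof. apply sqrt_lt_R0. lra. Qed.

Lemma w1_half x : Cdiv (Cmult (eI (PI / 4)) (RtoC x)) (RtoC 2) = (rr x, rr x).
Proof.
  unfold Cdiv, Cmult, Cinv, eI, cexp, RtoC, rr. simpl.
  rewrite exp_0, cos_PI4, sin_PI4. pose proof sqrt2_pos.
  f_equal; field; lra.
Qed.

Lemma w2_half x : Cdiv (Cmult (eI (- (PI / 4))) (RtoC x)) (RtoC 2) = (rr x, - rr x).
Proof.
  unfold Cdiv, Cmult, Cinv, eI, cexp, RtoC, rr. simpl.
  rewrite exp_0, cos_neg, sin_neg, cos_PI4, sin_PI4. pose proof sqrt2_pos.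
  f_equal; field; lra.
Qed.

Lemma rr_sq x : rr x ^ 2 + rr x ^ 2 = (x / 2) ^ 2.
Proof.
  unfold rr. pose proof sqrt2_pos. assert (E := sqrt_sqrt 2 ltac:(lra)).
  replace ((x / (2 * sqrt 2)) ^ 2) with (x * x / (4 * (sqrt 2 * sqrt 2))) by (field; lra).
  rewrite E. field.
Qed.

Lemma cmod_rr x s : 0 < x -> (s = 1 \/ s = -1) -> Cmod (rr x, s * rr x) = x / 2.
Proof.
  intros Hx Hs. unfold Cmod. simpl.
  replace ((s * rr x) * ((s * rr x) * 1)) with (rr x ^ 2 * (s * s)) by ring.
  replace (s * s) with 1 by (destruct Hs; subst; ring).
  replace (rr x * (rr x * 1) + rr x ^ 2 * 1) with (rr x ^ 2 + rr x ^ 2) by ring.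
  rewrite rr_sq. apply sqrt_pow2. lra.
Qed.

Lemma rr_pos x : 0 < x -> 0 < rr x.
Proof. intros. unfold rr. pose proof sqrt2_pos. apply Rdiv_lt_0_compat; lra. Qed.

Lemma carg_w1 x : 0 < x -> carg (rr x, rr x) = PI / 4.
Proof.
  intros Hx. unfold carg. simpl. pose proof (rr_pos x Hx).
  destruct (Rlt_dec 0 (rr x)); [|lra].
  replace (rr x / rr x) with 1 by (field; lra). apply atan_1.
Qed.

Lemma carg_w2 x : 0 < x -> carg (rr x, - rr x) = - (PI / 4).
Proof.
  intros Hx. unfold carg. simpl. pose proof (rr_pos x Hx).
  destruct (Rlt_dec 0 (rr x)); [|lra].
  replace (- rr x / rr x) with (- (1)) by (field; lra). rewrite atan_opp, atan_1. reflexivity.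
Qed.

Lemma cpow_w1 x e : 0 < x ->
  cpow (Cdiv (Cmult (eI (PI / 4)) (RtoC x)) (RtoC 2)) e =
  (exp (e * ln (x / 2)) * cos (e * (PI / 4)), exp (e * ln (x / 2)) * sin (e * (PI / 4))).
Proof.
  intros Hx. rewrite w1_half. unfold cpow, clog.
  replace (rr x, rr x) with (rr x, 1 * rr x) by (f_equal; ring).
  rewrite cmod_rr by (auto; lra). replace (rr x, 1 * rr x) with (rr x, rr x) by (f_equal; ring).
  rewrite carg_w1 by auto. unfold cexp, Cmult, RtoC. simpl.
  f_equal; f_equal; f_equal; ring.
Qed.

Lemma cpow_w2 x e : 0 < x ->
  cpow (Cdiv (Cmult (eI (- (PI / 4))) (RtoC x)) (RtoC 2)) e =
  (exp (e * ln (x / 2)) * cos (e * (PI / 4)), - (exp (e * ln (x / 2)) * sin (e * (PI / 4)))).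
Proof.
  intros Hx. rewrite w2_half. unfold cpow, clog.
  replace (rr x, - rr x) with (rr x, -1 * rr x) by (f_equal; ring).
  rewrite cmod_rr by (auto; lra). replace (rr x, -1 * rr x) with (rr x, - rr x) by (f_equal; ring).
  rewrite carg_w2 by auto. unfold cexp, Cmult, RtoC. simpl.
  replace (e * - (PI / 4) + 0 * ln (x / 2)) with (- (e * (PI / 4))) by ring.
  rewrite cos_neg, sin_neg.
  replace (e * ln (x / 2) - 0 * - (PI / 4)) with (e * ln (x / 2)) by ring. f_equal. ring.
Qed.

Lemma cos_d y : is_derive cos y (- sin y).
Proof. auto_derive. auto. ring. Qed.
Lemma sin_d y : is_derive sin y (cos y).
Proof. auto_derive. auto. ring. Qed.
Lemma cos_b y : Rabs (cos y) <= 1.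
Proof. apply Rabs_le. pose proof (COS_bound y). lra. Qed.
Lemma sin_b y : Rabs (sin y) <= 1.
Proof. apply Rabs_le. pose proof (SIN_bound y). lra. Qed.
Lemma msin_b y : Rabs (- sin y) <= 1.
Proof. rewrite Rabs_Ropp. apply sin_b. Qed.

Definition Aser (x mu : R) := Series (fun k => tk cos x mu k).
Definition Bser (x mu : R) := Series (fun k => tk sin x mu k).

Lemma A_ex x mu : ex_series (fun k => tk cos x mu k).
Proof. apply (tk_ex_series cos (fun y => - sin y) cos_b msin_b). Qed.
Lemma B_ex x mu : ex_series (fun k => tk sin x mu k).
Proof. apply (tk_ex_series sin cos sin_b cos_b). Qed.

Lemma A_der x mu : ex_derive (Aser x) mu.
Proof. eexists. apply (tk_series_derive cos (fun y => - sin y) cos_d cos_b msin_b). Qed.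
Lemma B_der x mu : ex_derive (Bser x) mu.
Proof. eexists. apply (tk_series_derive sin cos sin_d sin_b cos_b). Qed.

Definition w1 (x : R) := Cmult (eI (PI / 4)) (RtoC x).
Definition w2 (x : R) := Cmult (eI (- (PI / 4))) (RtoC x).

Lemma ReI x mu : 0 < x -> Re (BesselI mu (w1 x)) = Aser x mu.
Proof.
  intros Hx. unfold BesselI, csum, Aser. unfold Re at 1. cbn [fst]. apply Series_ext. intros k.
  unfold w1. rewrite cpow_w1 by auto. unfold tk, ck, thk. simpl. ring.
Qed.

Lemma ImI x mu : 0 < x -> Im (BesselI mu (w1 x)) = Bser x mu.
Proof.
  intros Hx. unfold BesselI, csum, Bser. unfold Im at 1. cbn [snd]. apply Series_ext. intros k.
  unfold w1. rewrite cpow_w1 by auto. unfold tk, ck, thk. simpl. ring.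
Qed.

Lemma sign_cos k y : (-1) ^ k * cos y = cos (y - INR k * PI).
Proof.
  induction k.
  - simpl. replace (y - 0 * PI) with y by ring. ring.
  - rewrite S_INR. replace (y - (INR k + 1) * PI) with ((y - INR k * PI) - PI) by ring.
    rewrite cos_minus, cos_PI, sin_PI, <- IHk. simpl. ring.
Qed.

Lemma sign_sin k y : (-1) ^ k * sin y = sin (y - INR k * PI).
Proof.
  induction k.
  - simpl. replace (y - 0 * PI) with y by ring. ring.
  - rewrite S_INR. replace (y - (INR k + 1) * PI) with ((y - INR k * PI) - PI) by ring.
    rewrite sin_minus, cos_PI, sin_PI, <- IHk. simpl. ring.
Qed.

Lemma series_lin (a b : nat -> R) (c d : R) : ex_series a -> ex_series b ->
  Series (fun k => c * a k + d * b k) = c * Series a + d * Series b.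
Proof.
  intros Ha Hb. rewrite Series_plus, !Series_scal_l; auto.
  apply (@ex_series_scal_l R_AbsRing R_NormedModule). auto.
  apply (@ex_series_scal_l R_AbsRing R_NormedModule). auto.
Qed.

Lemma ReJ x mu : 0 < x ->
  Re (BesselJ mu (w2 x)) = cos (PI * mu / 2) * Aser x mu + sin (PI * mu / 2) * Bser x mu.
Proof.
  intros Hx. unfold Aser, Bser. rewrite <- series_lin by (apply A_ex || apply B_ex).
  unfold BesselJ, csum. unfold Re at 1. cbn [fst]. apply Series_ext. intros k.
  unfold w2. rewrite cpow_w2 by auto. unfold tk, ck, thk. simpl.
  set (th := (mu + 2 * INR k) * (PI / 4)).
  assert (E : (-1) ^ k * cos th = cos (PI * mu / 2) * cos th + sin (PI * mu / 2) * sin th).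
  { rewrite sign_cos. replace (th - INR k * PI) with (- (th - PI * mu / 2)) by (unfold th; field).
    rewrite cos_neg, cos_minus. ring. }
  transitivity (rgamma (mu + INR k + 1) / INR (Factorial.fact k) * exp ((mu + 2 * INR k) * ln (x / 2)) * ((-1) ^ k * cos th)).
  unfold Rdiv. ring. rewrite E. unfold Rdiv. ring.
Qed.

Lemma ImJ x mu : 0 < x ->
  Im (BesselJ mu (w2 x)) = cos (PI * mu / 2) * Bser x mu - sin (PI * mu / 2) * Aser x mu.
Proof.
  intros Hx. unfold Aser, Bser.
  replace (cos (PI * mu / 2) * Series (fun k => tk sin x mu k) - sin (PI * mu / 2) * Series (fun k => tk cos x mu k))
    with (cos (PI * mu / 2) * Series (fun k => tk sin x mu k) + (- sin (PI * mu / 2)) * Series (fun k => tk cos x mu k)) by ring.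
  rewrite <- series_lin by (apply A_ex || apply B_ex).
  unfold BesselJ, csum. unfold Im at 1. cbn [snd]. apply Series_ext. intros k.
  unfold w2. rewrite cpow_w2 by auto. unfold tk, ck, thk. simpl.
  set (th := (mu + 2 * INR k) * (PI / 4)).
  assert (E : - ((-1) ^ k * sin th) = cos (PI * mu / 2) * sin th - sin (PI * mu / 2) * cos th).
  { rewrite sign_sin. rewrite <- sin_neg. replace (- (th - INR k * PI)) with (th - PI * mu / 2) by (unfold th; field).
    rewrite sin_minus. ring. }
  transitivity (rgamma (mu + INR k + 1) / INR (Factorial.fact k) * exp ((mu + 2 * INR k) * ln (x / 2)) * (- ((-1) ^ k * sin th))).
  unfold Rdiv. ring. rewrite E. unfold Rdiv. ring.
Qed.

Lemma ber_eq x mu : 0 < x -> ber mu x = cos (PI * mu / 2) * Aser x mu - sin (PI * mu / 2) * Bser x mu.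
Proof.
  intros Hx. unfold ber. fold (w2 x).
  assert (E1 := ReJ x mu Hx). assert (E2 := ImJ x mu Hx).
  set (J := BesselJ mu (w2 x)) in *. clearbody J.
  destruct J as [j1 j2]. unfold Re, Im in E1, E2. simpl in E1, E2.
  unfold eI, cexp, Cmult. simpl. rewrite exp_0. rewrite E1, E2.
  assert (C2 : cos (PI * mu) = cos (PI * mu / 2) * cos (PI * mu / 2) - sin (PI * mu / 2) * sin (PI * mu / 2)).
  { rewrite <- cos_2a. f_equal. field. }
  assert (S2 : sin (PI * mu) = 2 * sin (PI * mu / 2) * cos (PI * mu / 2)).
  { rewrite <- sin_2a. f_equal. field. }
  rewrite C2, S2. assert (S := sin2_cos2 (PI * mu / 2)). unfold Rsqr in S.
  set (c := cos (PI * mu / 2)) in *. set (s := sin (PI * mu / 2)) in *.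
  transitivity (c * (s * s + c * c) * Aser x mu - s * (s * s + c * c) * Bser x mu). ring.
  rewrite S. ring.
Qed.

Lemma bei_eq x mu : 0 < x -> bei mu x = sin (PI * mu / 2) * Aser x mu + cos (PI * mu / 2) * Bser x mu.
Proof.
  intros Hx. unfold bei. fold (w2 x).
  assert (E1 := ReJ x mu Hx). assert (E2 := ImJ x mu Hx).
  set (J := BesselJ mu (w2 x)) in *. clearbody J.
  destruct J as [j1 j2]. unfold Re, Im in E1, E2. simpl in E1, E2.
  unfold eI, cexp, Cmult. simpl. rewrite exp_0. rewrite E1, E2.
  assert (C2 : cos (PI * mu) = cos (PI * mu / 2) * cos (PI * mu / 2) - sin (PI * mu / 2) * sin (PI * mu / 2)).
  { rewrite <- cos_2a. f_equal. field. }
  assert (S2 : sin (PI * mu) = 2 * sin (PI * mu / 2) * cos (PI * mu / 2)).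
  { rewrite <- sin_2a. f_equal. field. }
  rewrite C2, S2. assert (S := sin2_cos2 (PI * mu / 2)). unfold Rsqr in S.
  set (c := cos (PI * mu / 2)) in *. set (s := sin (PI * mu / 2)) in *.
  transitivity (s * (s * s + c * c) * Aser x mu + c * (s * s + c * c) * Bser x mu). ring.
  rewrite S. ring.
Qed.

Lemma tk_refl phi x n k : tk phi x (- INR n) (n + k) = tk phi x (INR n) k.
Proof.
  unfold tk, ck, thk. rewrite plus_INR.
  replace (- INR n + (INR n + INR k) + 1) with (INR k + 1) by ring.
  replace (INR n + INR k + 1) with (INR (n + k) + 1) by (rewrite plus_INR; ring).
  rewrite !rg_fact.
  replace (- INR n + 2 * (INR n + INR k)) with (INR n + 2 * INR k) by ring.
  assert (INR (Factorial.fact k) <> 0) by apply INR_fact_neq_0.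
  assert (INR (Factorial.fact (n + k)) <> 0) by apply INR_fact_neq_0.
  field. auto.
Qed.

Lemma tk_head phi x n k : (k < n)%nat -> tk phi x (- INR n) k = 0.
Proof.
  intros Hk. unfold tk, ck.
  replace (- INR n + INR k + 1) with (- INR (n - S k)) by (rewrite minus_INR by lia; rewrite S_INR; ring).
  rewrite rg_negint. unfold Rdiv. ring.
Qed.

Lemma sum_zero (a : nat -> R) m : (forall k, (k <= m)%nat -> a k = 0) -> sum_f_R0 a m = 0.
Proof.
  induction m; intros H; simpl. apply H; lia.
  rewrite IHm. rewrite (H (S m)). ring. lia. intros k Hk. apply H. lia.
Qed.

Lemma series_refl phi x n : (0 < n)%nat -> ex_series (fun k => tk phi x (- INR n) k) ->
  Series (fun k => tk phi x (- INR n) k) = Series (fun k => tk phi x (INR n) k).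
Proof.
  intros Hn Hex. rewrite (Series_incr_n _ n Hn Hex).
  rewrite sum_zero. rewrite Rplus_0_l. apply Series_ext. intros k. apply tk_refl.
  intros k Hk. apply tk_head. lia.
Qed.

Lemma A_refl x n : (0 < n)%nat -> Aser x (- INR n) = Aser x (INR n).
Proof. intros. apply series_refl; auto. apply A_ex. Qed.
Lemma B_refl x n : (0 < n)%nat -> Bser x (- INR n) = Bser x (INR n).
Proof. intros. apply series_refl; auto. apply B_ex. Qed.

Lemma dq_lim (g : R -> R) (a dg : R) : is_derive g a dg -> g a = 0 ->
  is_lim (fun y => g y / (y - a)) a dg.
Proof.
  intros Hd H0. apply is_lim_spec. intros eps.
  apply is_derive_Reals in Hd. destruct (Hd eps (cond_pos eps)) as [del Hdel].
  exists del. intros y Hy Hne. change R in y. change (Rabs (y - a) < del) in Hy.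
  assert (Hh : y - a <> 0) by (intro; apply Hne; lra).
  specialize (Hdel (y - a) Hh Hy). replace (a + (y - a)) with y in Hdel by ring.
  rewrite H0, Rminus_0_r in Hdel. auto.
Qed.

Lemma lhop (g h : R -> R) (a dg dh k : R) :
  is_derive g a dg -> is_derive h a dh -> g a = 0 -> h a = 0 -> dh <> 0 ->
  is_lim (fun y => k / h y * g y) a (k * dg / dh).
Proof.
  intros Hg Hh Hg0 Hh0 Hdh.
  assert (Lg := dq_lim g a dg Hg Hg0). assert (Lh := dq_lim h a dh Hh Hh0).
  assert (Hnz : Rbar_locally' a (fun y => h y / (y - a) <> 0)).
  { apply is_lim_spec in Lh. destruct (Lh (mkposreal (Rabs dh) (Rabs_pos_lt _ Hdh))) as [del Hdel].
    exists del. intros y Hy Hne. change R in y. specialize (Hdel y Hy Hne). simpl in Hdel.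
    intro E. rewrite E in Hdel. rewrite Rminus_0_l, Rabs_Ropp in Hdel. lra. }
  apply (is_lim_ext_loc (fun y => k * ((g y / (y - a)) / (h y / (y - a))))).
  { destruct Hnz as [del Hdel]. exists del. intros y Hy Hne. change R in y. specialize (Hdel y Hy Hne).
    assert (y - a <> 0) by (intro; apply Hne; lra).
    assert (h y <> 0). { intro E. apply Hdel. rewrite E. unfold Rdiv; ring. }
    field. auto. }
  assert (Hm : forall l, l = Rbar_mult k (Rbar_div dg dh) -> is_lim (fun y => k * ((g y / (y - a)) / (h y / (y - a)))) a l).
  { intros l ->. apply is_lim_scal_l. apply (is_lim_div _ _ a dg dh); auto.
    intro E. apply Hdh. injection E. auto. simpl. auto. }
  apply Hm. simpl. f_equal. unfold Rdiv. ring.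
Qed.

Lemma sin_lip a b : Rabs (sin (a * PI) - sin (b * PI)) <= PI * Rabs (a - b).
Proof.
  apply (mvt_bound (fun y => sin (y * PI)) (fun y => cos (y * PI) * PI) a (Rabs (a - b) + 1)).
  - intros y _. auto_derive. auto. ring.
  - intros y _. rewrite Rabs_mult, (Rabs_right PI) by (left; apply PI_RGT_0).
    assert (H := cos_b (y * PI)). pose proof PI_RGT_0. nra.
  - rewrite Rabs_minus_sym. lra.
  - rewrite Rminus_diag, Rabs_R0. pose proof (Rabs_pos (a - b)). lra.
Qed.

Lemma ReKraw x mu : 0 < x ->
  Re (BesselK_raw mu (w1 x)) = PI / 2 / sin (mu * PI) * (Aser x (- mu) - Aser x mu).
Proof.
  intros Hx. unfold BesselK_raw.
  assert (E1 := ReI x (- mu) Hx). assert (E2 := ReI x mu Hx).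
  destruct (BesselI (- mu) (w1 x)) as [p1 p2]. destruct (BesselI mu (w1 x)) as [q1 q2].
  unfold Re in *. simpl in *. subst. ring.
Qed.

Lemma ImKraw x mu : 0 < x ->
  Im (BesselK_raw mu (w1 x)) = PI / 2 / sin (mu * PI) * (Bser x (- mu) - Bser x mu).
Proof.
  intros Hx. unfold BesselK_raw.
  assert (E1 := ImI x (- mu) Hx). assert (E2 := ImI x mu Hx).
  destruct (BesselI (- mu) (w1 x)) as [p1 p2]. destruct (BesselI mu (w1 x)) as [q1 q2].
  unfold Im in *. simpl in *. subst. ring.
Qed.

Lemma kelvin_parts nu x :
  let K := BesselK nu (w1 x) in let dK := dorder BesselK nu (w1 x) in
  let dJ := dorder BesselJ nu (w2 x) in
  let c := cos (PI * nu / 2) in let s := sin (PI * nu / 2) in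
  let C := cos (PI * nu) in let S := sin (PI * nu) in
  let I1 := 2 * C * Re K + S * Im K + 2 / PI * S * Re dK in
  let I2 := 2 * C * Im K - S * Re K + 2 / PI * S * Im dK in
  Re (kelvin_rhs nu x) = c * I1 + s * I2 + Re dJ /\
  Im (kelvin_rhs nu x) = c * I2 - s * I1 + Im dJ.
Proof.
  intros K dK dJ c s C S I1 I2.
  unfold kelvin_rhs. fold (w1 x). fold (w2 x). fold K dK dJ.
  unfold I1, I2. clearbody K dK dJ.
  destruct K as [k1 k2]. destruct dK as [e1 e2]. destruct dJ as [j1 j2].
  unfold eI, cexp, Cmult, Cplus, RtoC, Re, Im, c, s, C, S. simpl.
  rewrite exp_0. rewrite !cos_neg, !sin_neg.
  split; ring.
Qed.

Lemma lim_cont (f : R -> R) mu : ex_derive f mu -> real (Lim f mu) = f mu.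
Proof.
  intros H. rewrite (is_lim_unique f mu (f mu)). reflexivity.
  apply is_lim_continuity. apply continuity_pt_filterlim. apply (ex_derive_continuous f). auto.
Qed.

Lemma Kr_lim_nonint x mu : 0 < x -> sin (mu * PI) <> 0 ->
  real (Lim (fun m => Re (BesselK_raw m (w1 x))) mu) = PI / 2 / sin (mu * PI) * (Aser x (- mu) - Aser x mu)
  /\ real (Lim (fun m => Im (BesselK_raw m (w1 x))) mu) = PI / 2 / sin (mu * PI) * (Bser x (- mu) - Bser x mu).
Proof.
  intros Hx Hs. split.
  - rewrite (Lim_ext (fun m => PI / 2 / sin (m * PI) * (Aser x (- m) - Aser x m)) (fun m => Re (BesselK_raw m (w1 x)))) by (intros; symmetry; apply ReKraw; auto).
    rewrite lim_cont. reflexivity.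
    assert (H1 := A_der x (- mu)). assert (H2 := A_der x mu).
    auto_derive. repeat split; auto.
  - rewrite (Lim_ext (fun m => PI / 2 / sin (m * PI) * (Bser x (- m) - Bser x m)) (fun m => Im (BesselK_raw m (w1 x)))) by (intros; symmetry; apply ImKraw; auto).
    rewrite lim_cont. reflexivity.
    assert (H1 := B_der x (- mu)). assert (H2 := B_der x mu).
    auto_derive. repeat split; auto.
Qed.

Lemma dK_nonint x nu : 0 < x -> sin (nu * PI) <> 0 ->
  Re (dorder BesselK nu (w1 x)) = Derive (fun m => PI / 2 / sin (m * PI) * (Aser x (- m) - Aser x m)) nu /\
  Im (dorder BesselK nu (w1 x)) = Derive (fun m => PI / 2 / sin (m * PI) * (Bser x (- m) - Bser x m)) nu.
Proof.
  intros Hx Hs.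
  assert (Hloc : locally nu (fun y => sin (y * PI) <> 0)).
  { assert (Hp : 0 < Rabs (sin (nu * PI)) / PI) by (apply Rdiv_lt_0_compat; [apply Rabs_pos_lt; auto | apply PI_RGT_0]).
    exists (mkposreal _ Hp). intros y Hy. change (Rabs (y - nu) < Rabs (sin (nu * PI)) / PI) in Hy.
    assert (L := sin_lip y nu). pose proof PI_RGT_0.
    intro E. rewrite E, Rminus_0_l, Rabs_Ropp in L.
    assert (PI * Rabs (y - nu) < Rabs (sin (nu * PI))).
    { apply (Rmult_lt_reg_r (/ PI)). apply Rinv_0_lt_compat; auto.
      replace (PI * Rabs (y - nu) * / PI) with (Rabs (y - nu)) by (field; lra). auto. }
    lra. }
  split; unfold dorder; [unfold Re at 1; cbn [fst] | unfold Im at 1; cbn [snd]];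
    apply Derive_ext_loc; destruct Hloc as [eps He]; exists eps; intros y Hy; specialize (He y Hy).
  - change (Re (BesselK y (w1 x))) with (real (Lim (fun m => Re (BesselK_raw m (w1 x))) y)).
    exact (proj1 (Kr_lim_nonint x y Hx He)).
  - change (Im (BesselK y (w1 x))) with (real (Lim (fun m => Im (BesselK_raw m (w1 x))) y)).
    exact (proj2 (Kr_lim_nonint x y Hx He)).
Qed.

Lemma K_int x n : 0 < x -> (0 < n)%nat ->
  Re (BesselK (INR n) (w1 x)) = PI / 2 * (- Derive (Aser x) (- INR n) - Derive (Aser x) (INR n)) / (cos (INR n * PI) * PI) /\
  Im (BesselK (INR n) (w1 x)) = PI / 2 * (- Derive (Bser x) (- INR n) - Derive (Bser x) (INR n)) / (cos (INR n * PI) * PI).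
Proof.
  intros Hx Hn.
  assert (Hs : sin (INR n * PI) = 0). { apply sin_eq_0_1. exists (Z.of_nat n). rewrite <- INR_IZR_INZ. reflexivity. }
  assert (Hc : cos (INR n * PI) * PI <> 0).
  { assert (S := sin2_cos2 (INR n * PI)). unfold Rsqr in S. rewrite Hs in S.
    pose proof PI_RGT_0. apply Rmult_integral_contrapositive. split; [|lra].
    intro E. rewrite E in S. lra. }
  split.
  - change (Re (BesselK (INR n) (w1 x))) with (real (Lim (fun m => Re (BesselK_raw m (w1 x))) (INR n))).
    rewrite (Lim_ext (fun m => PI / 2 / sin (m * PI) * (Aser x (- m) - Aser x m)) (fun m => Re (BesselK_raw m (w1 x)))) by (intros; symmetry; apply ReKraw; auto).
    rewrite (is_lim_unique _ _ (PI / 2 * (- Derive (Aser x) (- INR n) - Derive (Aser x) (INR n)) / (cos (INR n * PI) * PI))). reflexivity.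
    apply (lhop (fun m => Aser x (- m) - Aser x m) (fun m => sin (m * PI))).
    + assert (H1 := A_der x (- INR n)). assert (H2 := A_der x (INR n)).
      auto_derive. auto. change (fun x0 => Aser x x0) with (Aser x). ring.
    + auto_derive. auto. ring.
    + rewrite A_refl by auto. ring.
    + auto.
    + auto.
  - change (Im (BesselK (INR n) (w1 x))) with (real (Lim (fun m => Im (BesselK_raw m (w1 x))) (INR n))).
    rewrite (Lim_ext (fun m => PI / 2 / sin (m * PI) * (Bser x (- m) - Bser x m)) (fun m => Im (BesselK_raw m (w1 x)))) by (intros; symmetry; apply ImKraw; auto).
    rewrite (is_lim_unique _ _ (PI / 2 * (- Derive (Bser x) (- INR n) - Derive (Bser x) (INR n)) / (cos (INR n * PI) * PI))). reflexivity.
    apply (lhop (fun m => Bser x (- m) - Bser x m) (fun m => sin (m * PI))).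
    + assert (H1 := B_der x (- INR n)). assert (H2 := B_der x (INR n)).
      auto_derive. auto. change (fun x0 => Bser x x0) with (Bser x). ring.
    + auto_derive. auto. ring.
    + rewrite B_refl by auto. ring.
    + auto.
    + auto.
Qed.

Theorem mainTheorem2 : forall x nu : R, 0 < x -> 0 < nu ->
  is_derive (fun mu => ber mu x) (- nu) (- Re (kelvin_rhs nu x)) /\
  is_derive (fun mu => bei mu x) (- nu) (- Im (kelvin_rhs nu x)).
Proof.
  intros x nu Hx Hnu.
  assert (HA1 := A_der x (- nu)). assert (HA2 := A_der x nu).
  assert (HB1 := B_der x (- nu)). assert (HB2 := B_der x nu).
  assert (Lber : is_derive (fun mu => ber mu x) (- nu)
     (- (PI / 2) * sin (PI * - nu / 2) * Aser x (- nu) + cos (PI * - nu / 2) * Derive (Aser x) (- nu)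
      - ((PI / 2) * cos (PI * - nu / 2) * Bser x (- nu) + sin (PI * - nu / 2) * Derive (Bser x) (- nu)))).
  { apply (is_derive_ext (fun mu => cos (PI * mu / 2) * Aser x mu - sin (PI * mu / 2) * Bser x mu)).
    intros t; symmetry; apply ber_eq; auto.
    auto_derive. repeat split; auto.
    try change (fun x0 : R => Aser x x0) with (Aser x).
    try change (fun x0 : R => Bser x x0) with (Bser x). unfold Rdiv. ring. }
  assert (Lbei : is_derive (fun mu => bei mu x) (- nu)
     ((PI / 2) * cos (PI * - nu / 2) * Aser x (- nu) + sin (PI * - nu / 2) * Derive (Aser x) (- nu)
      - (PI / 2) * sin (PI * - nu / 2) * Bser x (- nu) + cos (PI * - nu / 2) * Derive (Bser x) (- nu))).
  { apply (is_derive_ext (fun mu => sin (PI * mu / 2) * Aser x mu + cos (PI * mu / 2) * Bser x mu)).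
    intros t; symmetry; apply bei_eq; auto.
    auto_derive. repeat split; auto.
    try change (fun x0 : R => Aser x x0) with (Aser x).
    try change (fun x0 : R => Bser x x0) with (Bser x). unfold Rdiv. ring. }
  assert (DJ1 : Re (dorder BesselJ nu (w2 x)) =
     - (PI / 2) * sin (PI * nu / 2) * Aser x nu + cos (PI * nu / 2) * Derive (Aser x) nu
     + (PI / 2) * cos (PI * nu / 2) * Bser x nu + sin (PI * nu / 2) * Derive (Bser x) nu).
  { unfold dorder. unfold Re at 1. cbn [fst].
    rewrite (Derive_ext (fun mu => Re (BesselJ mu (w2 x))) (fun mu => cos (PI * mu / 2) * Aser x mu + sin (PI * mu / 2) * Bser x mu))
      by (intros; apply ReJ; auto).
    apply is_derive_unique. auto_derive. repeat split; auto.
    try change (fun x0 : R => Aser x x0) with (Aser x).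
    try change (fun x0 : R => Bser x x0) with (Bser x). unfold Rdiv. ring. }
  assert (DJ2 : Im (dorder BesselJ nu (w2 x)) =
     - (PI / 2) * sin (PI * nu / 2) * Bser x nu + cos (PI * nu / 2) * Derive (Bser x) nu
     - (PI / 2) * cos (PI * nu / 2) * Aser x nu - sin (PI * nu / 2) * Derive (Aser x) nu).
  { unfold dorder. unfold Im at 1. cbn [snd].
    rewrite (Derive_ext (fun mu => Im (BesselJ mu (w2 x))) (fun mu => cos (PI * mu / 2) * Bser x mu - sin (PI * mu / 2) * Aser x mu))
      by (intros; apply ImJ; auto).
    apply is_derive_unique. auto_derive. repeat split; auto.
    try change (fun x0 : R => Aser x x0) with (Aser x).
    try change (fun x0 : R => Bser x x0) with (Bser x). unfold Rdiv. ring. }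
  pose proof (kelvin_parts nu x) as KP. cbv zeta in KP. destruct KP as [ERe EIm].
  assert (Tc : cos (PI * - nu / 2) = cos (PI * nu / 2)).
  { replace (PI * - nu / 2) with (- (PI * nu / 2)) by field. apply cos_neg. }
  assert (Ts : sin (PI * - nu / 2) = - sin (PI * nu / 2)).
  { replace (PI * - nu / 2) with (- (PI * nu / 2)) by field. apply sin_neg. }
  rewrite Tc, Ts in Lber, Lbei.
  assert (HPI := PI_RGT_0).
  destruct (Req_dec (sin (PI * nu)) 0) as [HS|HS].
  -
    destruct (sin_eq_0_0 _ HS) as [k Hk].
    assert (Hnk : nu = IZR k) by (apply (Rmult_eq_reg_r PI); [rewrite <- Hk; ring | lra]).
    assert (Hk0 : (0 < k)%Z) by (apply lt_0_IZR; lra).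
    assert (Hn : nu = INR (Z.to_nat k)) by (rewrite INR_IZR_INZ, Z2Nat.id by lia; auto).
    assert (Hn0 : (0 < Z.to_nat k)%nat) by lia.
    set (n := Z.to_nat k) in *. clearbody n. clear Hnk Hk. subst nu.
    destruct (K_int x n Hx Hn0) as [K1 K2].
    rewrite (Rmult_comm (INR n) PI) in K1, K2.
    assert (HC : cos (PI * INR n) <> 0).
    { assert (S := sin2_cos2 (PI * INR n)). unfold Rsqr in S. rewrite HS in S.
      intro E. rewrite E in S. lra. }
    rewrite (A_refl x n Hn0), (B_refl x n Hn0) in Lber, Lbei.
    split.
    + match type of Lber with is_derive _ _ ?v => replace (- Re (kelvin_rhs (INR n) x)) with v; [exact Lber|] end.
      rewrite ERe, HS, K1, K2, DJ1. field. split; lra || auto.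
    + match type of Lbei with is_derive _ _ ?v => replace (- Im (kelvin_rhs (INR n) x)) with v; [exact Lbei|] end.
      rewrite EIm, HS, K1, K2, DJ2. field. split; lra || auto.
  -
    assert (HS' : sin (nu * PI) <> 0) by (rewrite Rmult_comm; auto).
    destruct (Kr_lim_nonint x nu Hx HS') as [K1 K2].
    change (real (Lim (fun m => Re (BesselK_raw m (w1 x))) nu)) with (Re (BesselK nu (w1 x))) in K1.
    change (real (Lim (fun m => Im (BesselK_raw m (w1 x))) nu)) with (Im (BesselK nu (w1 x))) in K2.
    destruct (dK_nonint x nu Hx HS') as [dK1 dK2].
    assert (V1 : Derive (fun m => PI / 2 / sin (m * PI) * (Aser x (- m) - Aser x m)) nu =
       PI / 2 * (- (cos (nu * PI) * PI) / (sin (nu * PI) * sin (nu * PI))) * (Aser x (- nu) - Aser x nu)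
       + PI / 2 / sin (nu * PI) * (- Derive (Aser x) (- nu) - Derive (Aser x) nu)).
    { apply is_derive_unique. auto_derive. repeat split; auto.
      try change (fun x0 : R => Aser x x0) with (Aser x). field. auto. }
    assert (V2 : Derive (fun m => PI / 2 / sin (m * PI) * (Bser x (- m) - Bser x m)) nu =
       PI / 2 * (- (cos (nu * PI) * PI) / (sin (nu * PI) * sin (nu * PI))) * (Bser x (- nu) - Bser x nu)
       + PI / 2 / sin (nu * PI) * (- Derive (Bser x) (- nu) - Derive (Bser x) nu)).
    { apply is_derive_unique. auto_derive. repeat split; auto.
      try change (fun x0 : R => Bser x x0) with (Bser x). field. auto. }
    rewrite V1 in dK1. rewrite V2 in dK2.
    rewrite (Rmult_comm nu PI) in K1, K2, dK1, dK2.
    split.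
    + match type of Lber with is_derive _ _ ?v => replace (- Re (kelvin_rhs nu x)) with v; [exact Lber|] end.
      rewrite ERe, K1, K2, dK1, dK2, DJ1. field. split; lra || auto.
    + match type of Lbei with is_derive _ _ ?v => replace (- Im (kelvin_rhs nu x)) with v; [exact Lbei|] end.
      rewrite EIm, K1, K2, dK1, dK2, DJ2. field. split; lra || auto.
Qed.
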